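(* Let $r_2>4$ and let $c$ be an integer with $0<c<\frac{r_2-2}{2}$. Then there is no graph with parameters $(r_2,r_3)$ where $r_3=\binom{r_2-1}{2}+c$.
   Context: All graphs are finite, simple and undirected. The $K_3$-degree of a vertex $v$ is the number of triangles of $G$ containing $v$. A graph $G$ has parameters $(r_2,r_3)$ if every vertex has degree $r_2$ and every vertex has $K_3$-degree $r_3$. *)

(* Defs.v *)
From mathcomp Require Import all_boot.
Set Implicit Arguments. Unset Strict Implicit. Unset Printing Implicit Defensive.

Definition simple_graph (T : finType) (e : rel T) : Prop :=
  symmetric e /\ irreflexive e.

Definition nbhd (T : finType) (e : rel T) (v : T) : {set T} := [set y | e v y].
Definition degree (T : finType) (e : rel T) (v : T) : nat := #|nbhd e v|.

Definition is_triangle (T : finType) (e : rel T) (S : {set T}) : bool :=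
  (#|S| == 3) && [forall x in S, forall y in S, (x != y) ==> e x y].

Definition k3_degree (T : finType) (e : rel T) (v : T) : nat :=
  #|[set S : {set T} | is_triangle e S & v \in S]|.

Definition has_params (T : finType) (e : rel T) (r2 r3 : nat) : Prop :=
  forall v : T, degree e v = r2 /\ k3_degree e v = r3.

(* Main.v *)
Require Import Defs.
From mathcomp Require Import all_boot.
From mathcomp Require Import zify.
Set Implicit Arguments. Unset Strict Implicit. Unset Printing Implicit Defensive.

Lemma bin2_double n : 2 * 'C(n, 2) = n * (n - 1).
Proof. elim: n => [|n IH] //. rewrite binS bin1 mulnDr IH; case: n {IH} => [|n] //; nia. Qed.

Lemma tri3 (T : finType) (e : rel T) : symmetric e ->
  forall w x y, e w x -> e w y -> e x y -> w != x -> w != y -> x != y ->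
  is_triangle e [set w; x; y].
Proof.
move=> se w x y ewx ewy exy nwx nwy nxy.
apply/andP; split.
  by rewrite setUC cardsU1 cards2 !inE negb_or !(eq_sym y) nwy nxy nwx.
apply/'forall_in_forall_inP=> a ha b hb.
move: ha hb; rewrite !inE => /orP[/orP[]|]/eqP-> /orP[/orP[]|]/eqP->;
  by rewrite ?eqxx ?(se x w) ?(se y w) ?(se y x) ?ewx ?ewy ?exy ?implybT.
Qed.

Lemma tri_edge (T : finType) (e : rel T) S a b :
  is_triangle e S -> a \in S -> b \in S -> a != b -> e a b.
Proof.
move=> /andP[_ /'forall_in_forall_inP H] ha hb nab.
by move: (H a ha b hb); rewrite nab.
Qed.

Lemma K1 (T : finType) (e : rel T) : symmetric e -> irreflexive e ->
  forall w x, e w x ->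
  #|[set S : {set T} | is_triangle e S & (w \in S) && (x \in S)]| =
  #|[set y | e w y && e x y]|.
Proof.
move=> se ie w x ewx.
have nwx : w != x by apply: contraTneq ewx => ->; rewrite ie.
set Y := [set y | e w y && e x y].
have -> : [set S : {set T} | is_triangle e S & (w \in S) && (x \in S)] =
          [set [set w; x; y] | y in Y].
  apply/setP => S; rewrite inE; apply/andP/imsetP.
  - case=> tS /andP[wS xS].
    have c3 : #|S| = 3 by move: tS => /andP[/eqP].
    have : #|S :\ w :\ x| == 1.
      move: c3; rewrite (cardsD1 w S) wS (cardsD1 x (S :\ w)) !inE eq_sym nwx xS /=.
      by move=> h; apply/eqP; lia.
    move/cards1P => [y Hy].
    have yin : y \in S :\ w :\ x by rewrite Hy set11.
    move: (yin); rewrite !inE => /andP[nyx /andP[nyw yS]].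
    exists y.
      rewrite inE; apply/andP; split; apply: (tri_edge tS) => //.
        by rewrite eq_sym.
      by rewrite eq_sym.
    apply/setP => z; rewrite !inE.
    case: (eqVneq z w) => [->|nzw]; first by rewrite wS.
    case: (eqVneq z x) => [->|nzx]; first by rewrite xS.
    have := congr1 (fun A : {set T} => z \in A) Hy; rewrite /= !inE nzw nzx /= => ->.
    by [].
  - case=> y; rewrite inE => /andP[ewy exy] ->.
    split.
      apply: tri3 => //.
        by apply: contraTneq ewy => <-; rewrite ie.
      by apply: contraTneq exy => <-; rewrite ie.
    by rewrite !inE !eqxx orbT.
rewrite card_in_imset // => y1 y2; rewrite !inE => /andP[h1 h1'] /andP[h2 h2'] E.
have : y1 \in [set w; x; y2] by rewrite -E !inE eqxx orbT.
rewrite !inE => /orP[/orP[]|] /eqP // E1.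
  by move: h1; rewrite E1 ie.
by move: h1'; rewrite E1 ie.
Qed.

Lemma sumb_card (T : finType) (A : {set T}) : \sum_x (x \in A : nat) = #|A|.
Proof. by rewrite -sum1_card [RHS]big_mkcond; apply eq_bigr => x _; case: (x \in A). Qed.

Lemma K (T : finType) (e : rel T) : symmetric e -> irreflexive e ->
  forall w, \sum_(x in nbhd e w) #|[set y | e w y && e x y]| = 2 * k3_degree e w.
Proof.
move=> se ie w.
transitivity (\sum_(x in nbhd e w) \sum_(S | is_triangle e S && (w \in S)) (x \in S : nat)).
  apply eq_bigr => x; rewrite inE => xN.
  rewrite -K1 // -sumb_card [RHS]big_mkcond; apply eq_bigr => S _; rewrite !inE.
  by case: (is_triangle e S); case: (w \in S).
rewrite exchange_big /= /k3_degree -sumb_card big_distrr /= [LHS]big_mkcond /=.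
apply eq_bigr => S _.
rewrite inE; case tS: (is_triangle e S); case wS: (w \in S) => //=.
rewrite (eq_bigr (fun x => (x \in S :\ w : nat))); last first.
  move=> x; rewrite /nbhd !inE => ewx; case: (eqVneq x w) => [exw|nxw] /=.
    by rewrite exw ie in ewx.
  by [].
rewrite big_mkcond /= (eq_bigr (fun x => (x \in S :\ w : nat))); last first.
  move=> x _; rewrite /nbhd inE; case ewx: (e w x) => //.
  rewrite !inE; case: (eqVneq x w) => //= nxw; case xS: (x \in S) => //.
  by have := tri_edge tS wS xS; rewrite eq_sym nxw ewx => /(_ isT).
rewrite sumb_card.
move: tS => /andP[/eqP c3 _]; move: c3; rewrite (cardsD1 w S) wS.
by move=> h; lia.
Qed.


Lemma inN (T : finType) (e : rel T) x y : (y \in nbhd e x) = e x y.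
Proof. by rewrite /nbhd inE. Qed.

Lemma K' (T : finType) (e : rel T) : symmetric e -> irreflexive e ->
  forall w, \sum_x \sum_y (e w x && e w y && e x y : nat) = 2 * k3_degree e w.
Proof.
move=> se ie w; rewrite -K // [RHS]big_mkcond; apply eq_bigr => x _.
rewrite inN; case: (e w x) => /=.
  by rewrite -sumb_card; apply eq_bigr => y _; rewrite inE.
by rewrite big1.
Qed.

Lemma A2 (T : finType) (e : rel T) : symmetric e -> irreflexive e ->
  forall w z, e z w ->
  \sum_x \sum_y (e z x && ~~ e w x && e z y && ~~ e w y && e x y : nat)
    <= (#|nbhd e z :\: nbhd e w| - 1) * (#|nbhd e z :\: nbhd e w| - 2).
Proof.
move=> se ie w z ezw.
set C := nbhd e z :\: nbhd e w.
have inC y : (y \in C) = e z y && ~~ e w y by rewrite !inE ?inN andbC.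
rewrite (eq_bigr (fun x => if x \in C then #|[set y | (y \in C) && e x y]| else 0)); last first.
  move=> x _; rewrite inC; case: (e z x && ~~ e w x) => /=; last by rewrite big1.
  by rewrite -sumb_card; apply eq_bigr => y _; rewrite !inE ?inN; case: (e z y); case: (e w y); case: (e x y).
have wC : w \in C by rewrite inC ezw ie.
rewrite -big_mkcond (big_setD1 w) //=.
have -> : #|[set y | (y \in C) && e w y]| = 0.
  apply/eqP; rewrite cards_eq0; apply/eqP/setP => y; rewrite !inE ?inN.
  by case: (e w y); rewrite ?andbF.
rewrite add0n.
have cw : #|C :\ w| = #|C| - 1 by rewrite (cardsD1 w C) wC; lia.
apply: (@leq_trans (\sum_(x in C :\ w) (#|C| - 2))).
  apply: leq_sum => x; rewrite !inE => /andP[nxw xC].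
  have -> : #|C| - 2 = #|C :\ w :\ x|.
    by rewrite (cardsD1 w C) wC (cardsD1 x (C :\ w)) !inE nxw xC /=; lia.
  apply: subset_leq_card; apply/subsetP => y; rewrite !inE => /andP[yC exy].
  rewrite yC andbT; apply/andP; split.
    by apply: contraTneq exy => ->; rewrite ie.
  apply: contraTneq exy => ->; rewrite se; move: xC; by case/andP.
by rewrite sum_nat_const cw.
Qed.

Lemma M (T : finType) (e : rel T) : symmetric e -> irreflexive e ->
  forall r2, (forall x, \sum_y (e x y : nat) = r2) ->
  forall u v, e u v ->
  2 * k3_degree e v + 2 * k3_degree e u <=
  2 * (r2 * #|nbhd e u :&: nbhd e v|)
  + (#|nbhd e v :\: nbhd e u| - 1) * (#|nbhd e v :\: nbhd e u| - 2)
  + (#|nbhd e u :\: nbhd e v| - 1) * (#|nbhd e u :\: nbhd e v| - 2).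
Proof.
move=> se ie r2 deg u v euv.
rewrite -!K' // -big_split /=.
under eq_bigr do rewrite -big_split /=.
pose P1 x y := (e u x && e v x && (e u y || e v y) && e x y : nat).
pose P2 x y := (e v x && ~~ e u x && e v y && ~~ e u y && e x y : nat).
pose P3 x y := (e u x && ~~ e v x && e u y && ~~ e v y && e x y : nat).
pose G x y := 2 * P1 x y + P2 x y + P3 x y.
have E1 : \sum_x \sum_y ((e v x && e v y && e x y : nat) + (e u x && e u y && e x y : nat))
          = \sum_x \sum_y G x y.
  apply/eqP; rewrite -(eqn_pmul2l (isT : 0 < 2)); apply/eqP.
  rewrite big_distrr; under eq_bigr do rewrite big_distrr.
  transitivity (\sum_x \sum_y (G x y + G y x)).
    apply eq_bigr => x _; apply eq_bigr => y _; rewrite /G /P1 /P2 /P3 (se y x).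
    by case: (e u x); case: (e v x); case: (e u y); case: (e v y); case: (e x y).
  rewrite (eq_bigr (fun x => \sum_y G x y + \sum_y G y x)); last by move=> x _; rewrite big_split.
  rewrite big_split /= [X in _ + X]exchange_big /=.
  by rewrite mul2n -addnn.
rewrite E1.
have E2 : \sum_x \sum_y G x y = 2 * (\sum_x \sum_y P1 x y) + \sum_x \sum_y P2 x y
           + \sum_x \sum_y P3 x y.
  rewrite big_distrr -!big_split; apply eq_bigr => x _ /=.
  by rewrite big_distrr -!big_split.
rewrite E2.
have B1 : \sum_x \sum_y P1 x y <= r2 * #|nbhd e u :&: nbhd e v|.
  apply: (@leq_trans (\sum_x ((e u x && e v x : nat) * r2))).
    apply: leq_sum => x _; case h: (e u x && e v x).
      rewrite mul1n -(deg x); apply: leq_sum => y _; rewrite /P1 h.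
      by case: (e u y || e v y); case: (e x y).
    by rewrite big1 // => y _; rewrite /P1 h.
  rewrite -big_distrl /= mulnC leq_mul2l; apply/orP; right.
  by rewrite -sumb_card; apply: leq_sum => x _; rewrite !inE ?inN.
have vu : e v u by rewrite se.
have B2 := A2 se ie vu; have B3 := A2 se ie euv.
rewrite leq_add // leq_add // leq_mul2l B1 orbT //.
Qed.

Theorem proposition3p5 (r2 c : nat) :
  4 < r2 -> 0 < c -> 2 * c < r2 - 2 ->
  ~ exists (T : finType) (e : rel T),
      0 < #|T| /\ simple_graph e /\ has_params e r2 ('C(r2 - 1, 2) + c).
Proof.
move=> h4 hc h2c [T [e [hT [[se ie] hp]]]].
have deg x : \sum_y (e x y : nat) = r2.
  by rewrite -(proj1 (hp x)) /degree -sumb_card; apply eq_bigr => y _; rewrite inN.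
have k3 x : k3_degree e x = 'C(r2 - 1, 2) + c := proj2 (hp x).
have hb := bin2_double (r2 - 1).
have cN x : #|nbhd e x| = r2 := proj1 (hp x).
case/card_gt0P: hT => v _.
have cardI x : #|[set y | e v y && e x y]| = #|nbhd e x :&: nbhd e v|.
  by apply: eq_card => y; rewrite !inE ?inN andbC.
have [u evu hu] : exists2 u, e v u & #|nbhd e u :&: nbhd e v| <= r2 - 3.
  case: (boolP [exists x, e v x && (#|nbhd e x :&: nbhd e v| <= r2 - 3)]).
    by move=> /existsP[u /andP[h1 h2]]; exists u.
  rewrite negb_exists => /forallP H; exfalso.
  have := K se ie v; rewrite k3.
  have : \sum_(x in nbhd e v) (r2 - 2) <= \sum_(x in nbhd e v) #|[set y | e v y && e x y]|.
    apply: leq_sum => x; rewrite inN cardI => exv.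
    by move: (H x); rewrite exv /= -ltnNge; lia.
  rewrite sum_nat_const cN => h1 h2.
  nia.
have euv : e u v by rewrite se.
have := M se ie deg euv; rewrite !k3.
have c1 : #|nbhd e v :&: nbhd e u| + #|nbhd e v :\: nbhd e u| = r2 by rewrite cardsID cN.
have c2 : #|nbhd e u :&: nbhd e v| + #|nbhd e u :\: nbhd e v| = r2 by rewrite cardsID cN.
rewrite setIC in c1.
move: hu c1 c2.
set L := #|nbhd e u :&: nbhd e v|.
set C1 := #|nbhd e v :\: nbhd e u|.
set C2 := #|nbhd e u :\: nbhd e v|.
move=> hu c1 c2 h.
have eC1 : C1 = r2 - L by lia.
have eC2 : C2 = r2 - L by lia.
rewrite eC1 eC2 in h.
have [d hd] : exists d, r2 = L + 1 + d by exists (r2 - L - 1); lia.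
have d2 : 2 <= d by lia.
rewrite hd in h hb h2c.
have e1 : L + 1 + d - L - 1 = d by lia.
have e2 : L + 1 + d - L - 2 = d - 1 by lia.
have e3 : L + 1 + d - 1 - 1 = L + d - 1 by lia.
rewrite -!subnDA in h e1 e2.
nia.
Qed.
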